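(* Let $\theta\le0$ be such that $F_\theta(t_1,t_2)=t_1^{\,1+\theta\log t_2}\,t_2$, $0<t_1,t_2<1$, is a bivariate distribution function. Let $X=(X_1,X_2)$ be a nonnegative bivariate random vector with absolutely continuous distribution function $F$ supported in $(0,1)^2$, finite $\overline\varepsilon^*_i(X;t_1,t_2)$ and bivariate EIT components $m_i^X(t_1,t_2)$. Then $$\overline\varepsilon^*_i(X;t_1,t_2)=\left(\frac{1+\theta\log t_j}{2+\theta\log t_j}\right)m_i^X(t_1,t_2),\qquad i,j\in\{1,2\},\ i\ne j,$$ holds for all $0<t_1,t_2<1$ if and only if $F=F_\theta$, i.e. $F(t_1,t_2)=t_1^{\,1+\theta\log t_2}\,t_2$ for $0<t_1,t_2<1$.
   Context: Let $F(x_1,x_2)=P(X_1\le x_1,X_2\le x_2)$. For $t_1,t_2>0$ with $F(t_1,t_2)>0$ define the conditional dynamic cumulative past entropies (CDCPE) $$\overline\varepsilon^*_1(X;t_1,t_2)=-\int_0^{t_1}\frac{F(x_1,t_2)}{F(t_1,t_2)}\log\frac{F(x_1,t_2)}{F(t_1,t_2)}dx_1,\qquad \overline\varepsilon^*_2(X;t_1,t_2)=-\int_0^{t_2}\frac{F(t_1,x_2)}{F(t_1,t_2)}\log\frac{F(t_1,x_2)}{F(t_1,t_2)}dx_2,$$ and the components of the bivariate expected inactivity time $m_1^X(t_1,t_2)=\frac{1}{F(t_1,t_2)}\int_0^{t_1}F(x_1,t_2)dx_1$, $m_2^X(t_1,t_2)=\frac{1}{F(t_1,t_2)}\int_0^{t_2}F(t_1,x_2)dx_2$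 (i.e. $m_i^X(t_1,t_2)=E(t_i-X_i\mid X_1<t_1,X_2<t_2)$). *)

(* Defs.v *)
From Stdlib Require Import Reals Lra List ClassicalEpsilon.
Open Scope R_scope.

(** Riemann integral as a total function: the value of the Riemann integral
    of [f] on [a,b] when [f] is Riemann integrable there (arbitrary otherwise;
    integrability is always assumed separately where needed). *)
Definition RInt (f : R -> R) (a b : R) : R :=
  epsilon (inhabits 0)
    (fun v => exists pr : Riemann_integrable f a b, RiemannInt pr = v).

Definition rect_mass (F : R -> R -> R) (a1 b1 a2 b2 : R) : R :=
  F b1 b2 - F a1 b2 - F b1 a2 + F a1 a2.

Definition is_biv_cdf (F : R -> R -> R) : Prop :=
  (forall a1 b1 a2 b2, a1 <= b1 -> a2 <= b2 -> 0 <= rect_mass F a1 b1 a2 b2)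
  /\ (forall x1 x2 eps, 0 < eps -> exists delta, 0 < delta /\
        forall y1 y2, x1 <= y1 < x1 + delta -> x2 <= y2 < x2 + delta ->
          Rabs (F y1 y2 - F x1 x2) < eps)
  /\ (forall x2 eps, 0 < eps -> exists M, forall x1, x1 <= M -> Rabs (F x1 x2) < eps)
  /\ (forall x1 eps, 0 < eps -> exists M, forall x2, x2 <= M -> Rabs (F x1 x2) < eps)
  /\ (forall eps, 0 < eps -> exists M, forall x1 x2, M <= x1 -> M <= x2 ->
        Rabs (F x1 x2 - 1) < eps).

(** Rectangles (a1,b1,a2,b2) meaning (a1,b1] x (a2,b2]. *)
Definition rect := (R * R * R * R)%type.

Definition rect_wf (r : rect) : Prop :=
  let '(a1, b1, a2, b2) := r in a1 <= b1 /\ a2 <= b2.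

Definition rect_area (r : rect) : R :=
  let '(a1, b1, a2, b2) := r in (b1 - a1) * (b2 - a2).

Definition rect_massF (F : R -> R -> R) (r : rect) : R :=
  let '(a1, b1, a2, b2) := r in rect_mass F a1 b1 a2 b2.

Definition rect_disjoint (r s : rect) : Prop :=
  let '(a1, b1, a2, b2) := r in
  let '(c1, d1, c2, d2) := s in
  b1 <= c1 \/ d1 <= a1 \/ b2 <= c2 \/ d2 <= a2.

Definition sumR (l : list R) : R := fold_right Rplus 0 l.

(** Absolute continuity (w.r.t. Lebesgue measure) of the probability measure
    with distribution function F: epsilon-delta condition on finite families of
    pairwise disjoint rectangles (equivalent to mu << Lebesgue for finite mu). *)
Definition biv_abs_cont (F : R -> R -> R) : Prop :=
  forall eps, 0 < eps -> exists delta, 0 < delta /\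
    forall l : list rect,
      Forall rect_wf l -> ForallOrdPairs rect_disjoint l ->
      sumR (map rect_area l) < delta ->
      sumR (map (rect_massF F) l) < eps.

Definition supported_unit_square (F : R -> R -> R) : Prop :=
  (forall x1 x2, (x1 <= 0 \/ x2 <= 0) -> F x1 x2 = 0) /\ F 1 1 = 1.

Definition cdcpe1_integrand (F : R -> R -> R) (t1 t2 : R) (x1 : R) : R :=
  (F x1 t2 / F t1 t2) * ln (F x1 t2 / F t1 t2).

Definition cdcpe2_integrand (F : R -> R -> R) (t1 t2 : R) (x2 : R) : R :=
  (F t1 x2 / F t1 t2) * ln (F t1 x2 / F t1 t2).

Definition CDCPE1 (F : R -> R -> R) (t1 t2 : R) : R :=
  - RInt (cdcpe1_integrand F t1 t2) 0 t1.

Definition CDCPE2 (F : R -> R -> R) (t1 t2 : R) : R :=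
  - RInt (cdcpe2_integrand F t1 t2) 0 t2.

Definition EIT1 (F : R -> R -> R) (t1 t2 : R) : R :=
  / F t1 t2 * RInt (fun x1 => F x1 t2) 0 t1.

Definition EIT2 (F : R -> R -> R) (t1 t2 : R) : R :=
  / F t1 t2 * RInt (fun x2 => F t1 x2) 0 t2.

(** The family F_theta(t1,t2) = t1^(1 + theta log t2) t2 on (0,1)^2,
    extended to R^2 as a distribution function supported in (0,1)^2. *)
Definition Ftheta (theta : R) (t1 t2 : R) : R :=
  let u := Rmin t1 1 in
  let v := Rmin t2 1 in
  if Rle_dec u 0 then 0 else if Rle_dec v 0 then 0 else
  Rpower u (1 + theta * ln v) * v.

(* Main.v *)
Require Import Defs.
From Stdlib Require Import Reals Lra List ClassicalEpsilon.
From Coquelicot Require Import Coquelicot.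
Open Scope R_scope.

Lemma scalR (a b : R) : scal a b = a * b. Proof. reflexivity. Qed.
Lemma plusR (a b : R) : plus a b = a + b. Proof. reflexivity. Qed.
Lemma minusR (a b : R) : minus a b = a - b. Proof. reflexivity. Qed.
Lemma multR (a b : R) : mult a b = a * b. Proof. reflexivity. Qed.
Lemma oneR : (one : R) = 1. Proof. reflexivity. Qed.
Lemma zeroR : (zero : R) = 0. Proof. reflexivity. Qed.

Lemma locI t : 0 < t < 1 -> locally t (fun s => 0 < s < 1).
Proof.
  intros Ht. apply (locally_interval _ t 0 1); simpl; try lra. intros y H1 H2; simpl in *; lra.
Qed.

Lemma derH (f : R -> R) t :
  (forall s, 0 < s < 1 -> ex_RInt f 0 s) -> continuous f t -> 0 < t < 1 ->
  is_derive (fun s => RInt f 0 s) t (f t).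
Proof.
  intros Hi Hc Ht. apply is_derive_RInt with (a := 0); [|exact Hc].
  apply (filter_imp (fun s => 0 < s < 1)); [|now apply locI].
  intros s Hs. apply RInt_correct. now apply Hi.
Qed.

Lemma deriv0_const (f : R -> R) :
  (forall t, 0 < t < 1 -> is_derive f t 0) ->
  forall x y, 0 < x < 1 -> 0 < y < 1 -> f x = f y.
Proof.
  intros Hd x y Hx Hy.
  destruct (MVT_gen f x y (fun _ => 0)) as [c [Hc1 Hc2]].
  - intros z Hz. apply Hd. split.
    + apply Rle_lt_trans with (Rmin x y); [apply Rmin_glb; lra | lra].
    + apply Rlt_le_trans with (Rmax x y); [lra | apply Rmax_lub; lra].
  - intros z Hz. apply continuity_pt_filterlim. apply (@ex_derive_continuous R_AbsRing R_NormedModule).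
    exists 0. apply Hd. split.
    + apply Rlt_le_trans with (Rmin x y); [apply Rmin_glb_lt; lra | lra].
    + apply Rle_lt_trans with (Rmax x y); [lra | apply Rmax_lub_lt; lra].
  - lra.
Qed.

Lemma small0 (m C : R) : 0 < C -> (forall t, 0 < t < 1 -> Rabs m <= C * t) -> m = 0.
Proof.
  intros HC H. destruct (Req_dec m 0) as [E|E]; [exact E|exfalso].
  assert (Hm : 0 < Rabs m) by (apply Rabs_pos_lt; exact E).
  set (t := Rmin (1/2) (Rabs m / (2 * C))).
  assert (Ht1 : t <= 1/2) by apply Rmin_l.
  assert (Ht2 : t <= Rabs m / (2 * C)) by apply Rmin_r.
  assert (Ht0 : 0 < t) by (apply Rmin_glb_lt; [lra| apply Rdiv_lt_0_compat; lra]).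
  specialize (H t ltac:(lra)).
  assert (C * t <= Rabs m / 2).
  { apply Rle_trans with (C * (Rabs m / (2 * C))).
    apply Rmult_le_compat_l; lra. right; field; lra. }
  lra.
Qed.

Lemma ylny_bound y : 0 < y <= 1 -> Rabs (y * ln y) <= 1.
Proof.
  intros Hy.
  assert (H1 : ln y <= 0).
  { destruct (Req_dec y 1) as [->|E]. rewrite ln_1; lra.
    left. rewrite <- ln_1. apply ln_increasing; lra. }
  assert (H2 : - ln y <= / y - 1).
  { rewrite <- ln_Rinv by lra.
    assert (Hx : 0 < / y) by (apply Rinv_0_lt_compat; lra).
    pose proof (exp_ineq1_le (ln (/ y) - 1)) as Hexp.
    assert (ln (/ y) <= / y - 1); [|lra].
    destruct (Rle_or_lt (ln (/y)) (/y - 1)) as [h|h]; [exact h|].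
    exfalso. assert (exp (ln (/y)) > exp (/ y - 1)) by (apply exp_increasing; lra).
    rewrite exp_ln in H by exact Hx.
    pose proof (exp_ineq1_le (/y - 1)). lra. }
  assert (H3 : y * (- ln y) <= y * (/ y - 1)) by (apply Rmult_le_compat_l; lra).
  replace (y * (/ y - 1)) with (1 - y) in H3 by (field; lra).
  rewrite Rabs_left1.
  - lra.
  - assert (0 <= y * (- ln y)) by (apply Rmult_le_pos; lra). lra.
Qed.
Definition good (g : R -> R) : Prop :=
 (forall x, 0<x<1 -> 0 < g x) /\
 (forall x y, 0<x -> x<=y -> y<1 -> g x <= g y) /\
 (forall x, 0<x<1 -> continuous g x) /\
 (forall t, 0<t<1 -> ex_RInt g 0 t /\ ex_RInt (fun x => g x * ln (g x)) 0 t).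

Lemma H_le g t : good g -> 0 < t < 1 -> 0 <= RInt g 0 t <= t * g t.
Proof.
  intros [Hp [Hm [Hc Hi]]] Ht. destruct (Hi t Ht) as [Hg _]. split.
  - apply Rle_trans with (RInt (fun _ => 0) 0 t).
    + rewrite RInt_const, scalR. lra.
    + apply RInt_le; try lra; auto. apply ex_RInt_const.
      intros x Hx. left; apply Hp; lra.
  - apply Rle_trans with (RInt (fun _ => g t) 0 t).
    + apply RInt_le; try lra; auto. apply ex_RInt_const.
      intros x Hx. apply Hm; lra.
    + rewrite RInt_const, scalR. lra.
Qed.

Lemma H_pos g t : good g -> 0 < t < 1 -> 0 < RInt g 0 t.
Proof.
  intros Hgd Ht. pose proof Hgd as [Hp [Hm [Hc Hi]]].
  destruct (Hi t Ht) as [Hg _]. destruct (Hi (t/2) ltac:(lra)) as [Hg2 _].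
  assert (Hg3 : ex_RInt g (t/2) t) by (apply (ex_RInt_Chasles_2 g 0); [lra|exact Hg]).
  rewrite <- (RInt_Chasles g 0 (t/2) t Hg2 Hg3), plusR.
  pose proof (H_le g (t/2) Hgd ltac:(lra)).
  assert (RInt (fun _ => g (t/2)) (t/2) t <= RInt g (t/2) t).
  { apply RInt_le; try lra; auto. apply ex_RInt_const.
    intros x Hx. apply Hm; lra. }
  rewrite RInt_const, scalR in H0.
  assert (0 < (t - t/2) * g (t/2)) by (apply Rmult_lt_0_compat; [lra| apply Hp; lra]).
  lra.
Qed.

Lemma contG g t : good g -> 0 < t < 1 -> continuous (fun x => g x * ln (g x)) t.
Proof.
  intros [Hp [Hm [Hc Hi]]] Ht.
  apply (continuous_mult g (fun x => ln (g x))). apply Hc; auto.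
  apply (continuous_comp g ln). apply Hc; auto.
  apply (@ex_derive_continuous R_AbsRing R_NormedModule). exists (/ g t).
  apply is_derive_ln. apply Hp; auto.
Qed.

Lemma fwd1 g a : good g -> 1 <= a ->
  (forall t, 0 < t < 1 -> RInt (fun x => g x * ln (g x)) 0 t
       = (ln (g t) - a / (a + 1)) * RInt g 0 t) ->
  exists b, forall t, 0 < t < 1 -> ln (g t) = b + a * ln t.
Proof.
  intros Hgd Ha HE. pose proof Hgd as [Hp [Hm [Hc Hi]]].
  set (c := a / (a + 1)).
  set (H := (fun s => RInt g 0 s) : R -> R).
  set (K := (fun s => RInt (fun x => g x * ln (g x)) 0 s) : R -> R).
  assert (dH : forall t, 0 < t < 1 -> is_derive H t (g t)).
  { intros t Ht. apply derH; auto. intros s Hs; apply Hi; auto. }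
  assert (dK : forall t, 0 < t < 1 -> is_derive K t (g t * ln (g t))).
  { intros t Ht. apply (derH (fun x => g x * ln (g x))); auto.
    intros s Hs; apply Hi; auto. apply contG; auto. }
  assert (Hpos : forall t, 0 < t < 1 -> 0 < H t) by (intros; apply H_pos; auto).
  assert (dL : forall t, 0 < t < 1 -> is_derive (fun s => ln (g s)) t (c * g t / H t)).
  { intros t Ht.
    apply (is_derive_ext_loc (fun s => c + K s / H s)).
    - apply (filter_imp (fun s => 0 < s < 1)); [|now apply locI].
      intros s Hs. assert (E : c + K s / H s = ln (g s)); [|exact E].
      unfold K at 1. rewrite HE by auto. change (RInt g 0 s) with (H s). unfold c.
      assert (H s <> 0) by (apply Rgt_not_eq, Hpos; auto).
      field; repeat split; try lra; auto.
    - assert (E : c * g t / H t = plus 0 ((g t * ln (g t) * H t - K t * g t) / H t ^ 2)).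
      { rewrite plusR. unfold K at 1. rewrite HE by auto.
        change (RInt g 0 t) with (H t). fold c.
        field. apply Rgt_not_eq, Hpos; auto. }
      rewrite E. apply (is_derive_plus (fun _ => c) (fun s => K s / H s)).
      exact (is_derive_const (V:=R_NormedModule) c t). apply is_derive_div; auto.
      apply Rgt_not_eq, Hpos; auto. }
  assert (dg : forall t, 0 < t < 1 -> is_derive g t (c * g t / H t * g t)).
  { intros t Ht.
    apply (is_derive_ext_loc (fun s => exp (ln (g s)))).
    - apply (filter_imp (fun s => 0 < s < 1)); [|now apply locI].
      intros s Hs. assert (E : exp (ln (g s)) = g s); [|exact E]. apply exp_ln, Hp; auto.
    - replace (c * g t / H t * g t) with (scal (c * g t / H t) (exp (ln (g t)))).
      apply (is_derive_comp exp (fun s => ln (g s))). apply is_derive_exp. auto.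
      rewrite scalR, exp_ln; auto. }
  set (Phi := fun s => H s / g s - (1 - c) * s).
  assert (dPhi : forall t, 0 < t < 1 -> is_derive Phi t 0).
  { intros t Ht.
    assert (E : 0 = minus ((g t * g t - H t * (c * g t / H t * g t)) / g t ^ 2) ((1 - c) * one)).
    { rewrite minusR, oneR. assert (g t <> 0) by (apply Rgt_not_eq, Hp; auto).
      assert (H t <> 0) by (apply Rgt_not_eq, Hpos; auto).
      field; repeat split; auto. }
    rewrite E. apply (is_derive_minus (fun s => H s / g s) (fun s => (1 - c) * s)).
    apply is_derive_div; auto. apply Rgt_not_eq, Hp; auto.
    apply is_derive_scal. exact (is_derive_id (K:=R_AbsRing) t). }
  assert (HPhi : forall t, 0 < t < 1 -> Phi t = 0).
  { intros t Ht. rewrite (deriv0_const Phi dPhi t (1/2)) by (auto; lra).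
    apply (small0 _ 2). lra. intros s Hs.
    rewrite <- (deriv0_const Phi dPhi s (1/2)) by (auto; lra).
    unfold Phi. pose proof (H_le g s Hgd Hs). fold (H s) in H0.
    assert (Hgs := Hp s Hs).
    assert (0 <= H s / g s <= s).
    { split. apply Rdiv_le_0_compat; lra.
      apply Rmult_le_reg_r with (g s); auto. field_simplify; lra. }
    assert (0 < c < 1) by (unfold c; split; [apply Rdiv_lt_0_compat|apply Rmult_lt_reg_r with (a+1); [|field_simplify]]; lra).
    apply Rabs_le. nra. }
  set (Psi := fun s => ln (g s) - a * ln s).
  assert (dPsi : forall t, 0 < t < 1 -> is_derive Psi t 0).
  { intros t Ht.
    assert (E : 0 = minus (c * g t / H t) (a * / t)).
    { rewrite minusR. pose proof (HPhi t Ht) as P. unfold Phi in P.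
      assert (Hg := Hp t Ht). assert (HH := Hpos t Ht).
      assert (E2 : H t = (1 - c) * t * g t).
      { apply Rmult_eq_reg_r with (/ g t). rewrite Rmult_assoc, Rinv_r by lra.
        lra. apply Rinv_neq_0_compat; lra. }
      rewrite E2. unfold c. field. repeat split; lra. }
    rewrite E. apply (is_derive_minus (fun s => ln (g s)) (fun s => a * ln s)); auto.
    apply is_derive_scal. apply is_derive_ln. lra. }
  exists (Psi (1/2)). intros t Ht.
  rewrite <- (deriv0_const Psi dPsi t (1/2)) by (auto; lra). unfold Psi. ring.
Qed.

Lemma bwd1 g a b : good g -> 1 <= a -> (forall t, 0 < t < 1 -> g t <= 1) ->
  (forall t, 0 < t < 1 -> ln (g t) = b + a * ln t) ->
  forall t, 0 < t < 1 -> RInt (fun x => g x * ln (g x)) 0 t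
       = (ln (g t) - a / (a + 1)) * RInt g 0 t.
Proof.
  intros Hgd Ha Hle Hb. pose proof Hgd as [Hp [Hm [Hc Hi]]].
  set (c := a / (a + 1)).
  set (H := (fun s => RInt g 0 s) : R -> R).
  set (K := (fun s => RInt (fun x => g x * ln (g x)) 0 s) : R -> R).
  assert (dH : forall t, 0 < t < 1 -> is_derive H t (g t)).
  { intros t Ht. apply derH; auto. intros s Hs; apply Hi; auto. }
  assert (dK : forall t, 0 < t < 1 -> is_derive K t (g t * ln (g t))).
  { intros t Ht. apply (derH (fun x => g x * ln (g x))); auto.
    intros s Hs; apply Hi; auto. apply contG; auto. }
  assert (dL : forall t, 0 < t < 1 -> is_derive (fun s => ln (g s)) t (a / t)).
  { intros t Ht.
    apply (is_derive_ext_loc (fun s => b + a * ln s)).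
    - apply (filter_imp (fun s => 0 < s < 1)); [|now apply locI].
      intros s Hs. assert (E : b + a * ln s = ln (g s)); [|exact E]. rewrite Hb; auto.
    - assert (E : a / t = plus 0 (a * / t)) by (rewrite plusR; unfold Rdiv; ring). rewrite E.
      apply (is_derive_plus (fun _ => b) (fun s => a * ln s)).
      exact (is_derive_const (V:=R_NormedModule) b t).
      apply is_derive_scal. apply is_derive_ln. lra. }
  assert (dg : forall t, 0 < t < 1 -> is_derive g t (a / t * g t)).
  { intros t Ht.
    apply (is_derive_ext_loc (fun s => exp (ln (g s)))).
    - apply (filter_imp (fun s => 0 < s < 1)); [|now apply locI].
      intros s Hs. assert (E : exp (ln (g s)) = g s); [|exact E]. apply exp_ln, Hp; auto.
    - assert (E : scal (a / t) (exp (ln (g t))) = a / t * g t) by (rewrite (exp_ln (g t)); [reflexivity|apply Hp; auto]).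
      rewrite <- E.
      apply (is_derive_comp exp (fun s => ln (g s))). apply is_derive_exp. auto. }
  set (Phi := fun s => H s - / (a + 1) * (s * g s)).
  assert (dPhi : forall t, 0 < t < 1 -> is_derive Phi t 0).
  { intros t Ht.
    assert (E : 0 = minus (g t) (/ (a + 1) * plus (mult one (g t)) (mult t (a / t * g t)))).
    { unfold minus, plus, opp, mult, one; simpl. field. lra. }
    rewrite E. apply (is_derive_minus H (fun s => / (a + 1) * (s * g s))). auto.
    apply is_derive_scal.
    apply (is_derive_mult (fun s => s) g). exact (is_derive_id (K:=R_AbsRing) t). auto.
    intros; apply Rmult_comm. }
  assert (HPhi : forall t, 0 < t < 1 -> Phi t = 0).
  { intros t Ht. rewrite (deriv0_const Phi dPhi t (1/2)) by (auto; lra).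
    apply (small0 _ 2). lra. intros s Hs.
    rewrite <- (deriv0_const Phi dPhi s (1/2)) by (auto; lra).
    unfold Phi. pose proof (H_le g s Hgd Hs). change (RInt g 0 s) with (H s) in H0.
    assert (Hgs := Hp s Hs). assert (Hg1 := Hle s Hs).
    assert (0 < / (a + 1) <= 1).
    { split. apply Rinv_0_lt_compat; lra. rewrite <- Rinv_1. apply Rinv_le_contravar; lra. }
    assert (0 <= s * g s <= s) by (split; nra).
    apply Rabs_le. nra. }
  assert (HHt : forall t, 0 < t < 1 -> H t = t * g t / (a + 1)).
  { intros t Ht. pose proof (HPhi t Ht). unfold Phi in H0. unfold Rdiv. lra. }
  set (D := fun s => K s - (ln (g s) - c) * H s).
  assert (dD : forall t, 0 < t < 1 -> is_derive D t 0).
  { intros t Ht.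
    assert (E : 0 = minus (g t * ln (g t)) (plus (mult (minus (a / t) 0) (H t)) (mult (minus (ln (g t)) c) (g t)))).
    { unfold minus, plus, opp, mult, one; simpl. rewrite HHt by auto. unfold c. field. lra. }
    rewrite E. apply (is_derive_minus K (fun s => (ln (g s) - c) * H s)). auto.
    apply (is_derive_mult (fun s => ln (g s) - c) H); auto.
    apply (is_derive_minus (fun s => ln (g s)) (fun _ => c)). auto.
    exact (is_derive_const (V:=R_NormedModule) c t).
    intros; apply Rmult_comm. }
  intros t Ht.
  assert (D t = 0).
  { rewrite (deriv0_const D dD t (1/2)) by (auto; lra).
    apply (small0 _ 3). lra. intros s Hs.
    rewrite <- (deriv0_const D dD s (1/2)) by (auto; lra).
    unfold D. pose proof (H_le g s Hgd Hs). change (RInt g 0 s) with (H s) in H0.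
    assert (Hgs := Hp s Hs). assert (Hg1 := Hle s Hs).
    assert (Hy : Rabs (g s * ln (g s)) <= 1) by (apply ylny_bound; lra).
    destruct (Hi s Hs) as [_ HiG].
    assert (HK : Rabs (K s) <= s).
    { apply Rabs_le. split.
      - apply Rle_trans with (RInt (fun _ => -1) 0 s).
        + rewrite RInt_const, scalR. lra.
        + apply RInt_le; try lra; auto. apply ex_RInt_const.
          intros x Hx. assert (Rabs (g x * ln (g x)) <= 1) by (apply ylny_bound;
          split; [apply Hp; lra| apply Hle; lra]).
          revert H1. unfold Rabs. destruct Rcase_abs; lra.
      - apply Rle_trans with (RInt (fun _ => 1) 0 s).
        + apply RInt_le; try lra; auto. apply ex_RInt_const.
          intros x Hx. assert (Rabs (g x * ln (g x)) <= 1) by (apply ylny_bound;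
          split; [apply Hp; lra| apply Hle; lra]).
          revert H1. unfold Rabs. destruct Rcase_abs; lra.
        + rewrite RInt_const, scalR. lra. }
    assert (0 < c <= 1) by (unfold c; split; [apply Rdiv_lt_0_compat|apply Rmult_le_reg_r with (a+1); [|field_simplify]]; lra).
    assert (Hl0 : ln (g s) <= 0).
    { destruct (Req_dec (g s) 1) as [->|E]. rewrite ln_1; lra.
      left. rewrite <- ln_1. apply ln_increasing; lra. }
    rewrite Rabs_left1 in Hy by nra.
    assert (Rabs ((ln (g s) - c) * H s) <= 2 * s).
    { rewrite Rabs_mult. rewrite (Rabs_right (H s)) by lra.
      rewrite Rabs_left1 by lra.
      assert (- (ln (g s) - c) * H s <= - (ln (g s) - c) * (s * g s)) by (apply Rmult_le_compat_l; lra).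
      nra. }
    pose proof (Rabs_triang (K s) (- ((ln (g s) - c) * H s))) as Ht3.
    rewrite Rabs_Ropp in Ht3. unfold Rminus in *. lra. }
  unfold D in H0. change (RInt g 0 t) with (H t). fold c. lra.
Qed.

Lemma RInt_eq f a b : inhabited (Riemann_integrable f a b) -> Defs.RInt f a b = RInt f a b.
Proof.
  intros [pr]. unfold Defs.RInt.
  destruct (epsilon_spec (inhabits 0)
    (fun v => exists pr : Riemann_integrable f a b, RiemannInt pr = v)
    (ex_intro _ (RiemannInt pr) (ex_intro _ pr eq_refl))) as [pr' E].
  rewrite <- E. symmetry. apply RInt_Reals.
Qed.

Lemma ptw (g : R -> R) t x : 0 < g x -> 0 < g t ->
  g t * (g x / g t * ln (g x / g t)) + ln (g t) * g x = g x * ln (g x).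
Proof.
  intros Hx Ht. rewrite ln_div by auto. field. lra.
Qed.

Lemma exG (g : R -> R) t : 0 < t -> (forall x, 0 < x < t -> 0 < g x) -> 0 < g t ->
  ex_RInt g 0 t -> ex_RInt (fun x => g x / g t * ln (g x / g t)) 0 t ->
  ex_RInt (fun x => g x * ln (g x)) 0 t.
Proof.
  intros Ht Hp Hgt Hg HI.
  apply (ex_RInt_ext (V := R_NormedModule) (fun x => plus (scal (g t) (g x / g t * ln (g x / g t))) (scal (ln (g t)) (g x)))).
  - intros x Hx. rewrite Rmin_left, Rmax_right in Hx by lra.
    
    assert (E := ptw g t x (Hp x Hx) Hgt). exact E.
  - apply (ex_RInt_plus (V := R_NormedModule)); apply (ex_RInt_scal (V := R_NormedModule)); auto.
Qed.
Lemma equiv1 (g : R -> R) t c : 0 < t -> (forall x, 0 < x < t -> 0 < g x) -> 0 < g t ->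
  ex_RInt g 0 t -> ex_RInt (fun x => g x / g t * ln (g x / g t)) 0 t ->
  (- RInt (fun x => g x / g t * ln (g x / g t)) 0 t = c * (/ g t * RInt g 0 t) <->
   RInt (fun x => g x * ln (g x)) 0 t = (ln (g t) - c) * RInt g 0 t).
Proof.
  intros Ht Hp Hgt Hg HI.
  assert (RG : RInt (fun x => g x * ln (g x)) 0 t =
     g t * RInt (fun x => g x / g t * ln (g x / g t)) 0 t + ln (g t) * RInt g 0 t).
  { rewrite <- (RInt_ext (V := R_CompleteNormedModule) (fun x => plus (scal (g t) (g x / g t * ln (g x / g t))) (scal (ln (g t)) (g x)))).
    - rewrite (RInt_plus (V := R_CompleteNormedModule)) by (apply (ex_RInt_scal (V := R_NormedModule)); auto).
      rewrite !(RInt_scal (V := R_CompleteNormedModule)) by auto. reflexivity.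
    - intros x Hx. rewrite Rmin_left, Rmax_right in Hx by lra.
      assert (E := ptw g t x (Hp x Hx) Hgt). exact E. }
  
  rewrite RG.
  set (X := (RInt (fun x => g x / g t * ln (g x / g t)) 0 t : R)).
  set (Y := (RInt g 0 t : R)).
  split; intro E.
  - assert (G : g t * X + ln (g t) * Y = (ln (g t) - c) * Y :> R); [|exact G].
    assert (X = - (c * (/ g t * Y))) by lra. rewrite H. field. lra.
  - assert (G : - X = c * (/ g t * Y) :> R); [|exact G].
    assert (g t * X = - c * Y) by lra.
    replace X with (/ g t * (g t * X)) by (field; lra). rewrite H. field. lra.
Qed.

Lemma abs1 F : biv_abs_cont F -> forall eps, 0 < eps -> exists delta, 0 < delta /\
  forall a1 b1 a2 b2, a1 <= b1 -> a2 <= b2 -> (b1 - a1) * (b2 - a2) < delta ->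
  rect_mass F a1 b1 a2 b2 < eps.
Proof.
  intros Hac eps Heps. destruct (Hac eps Heps) as [d [Hd Hl]].
  exists d. split; auto. intros a1 b1 a2 b2 H1 H2 H3.
  specialize (Hl ((a1, b1, a2, b2) :: nil)).
  simpl in Hl. rewrite !Rplus_0_r in Hl. apply Hl; auto.
  - constructor; [simpl; auto | constructor].
  - constructor; constructor.
Qed.

Lemma good_of (g : R -> R) :
 (forall x, 0<x<1 -> 0 < g x) ->
 (forall x y, 0<x -> x<=y -> y<1 -> g x <= g y) ->
 (forall eps, 0 < eps -> exists d, 0 < d /\ forall x y, 0 < x -> x <= y -> y < 1 -> y - x < d -> g y - g x < eps) ->
 (forall t, 0<t<1 -> ex_RInt g 0 t /\ ex_RInt (fun x => g x / g t * ln (g x / g t)) 0 t) ->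
 good g.
Proof.
  intros Hp Hm Hc Hi. split; [|split; [|split]]; auto.
  - intros x Hx. apply (proj1 (continuity_pt_filterlim g x)).
    apply (proj2 (continuity_pt_locally g x)). intros eps.
    destruct (Hc eps (cond_pos eps)) as [d [Hd Hdd]].
    assert (Hr : 0 < Rmin d (Rmin x (1 - x))) by (repeat apply Rmin_glb_lt; lra).
    exists (mkposreal _ Hr). intros u Hu.
    assert (Hu' : Rabs (u - x) < Rmin d (Rmin x (1 - x))) by exact Hu.
    pose proof (Rmin_l d (Rmin x (1 - x))). pose proof (Rmin_r d (Rmin x (1 - x))).
    pose proof (Rmin_l x (1 - x)). pose proof (Rmin_r x (1 - x)).
    apply Rabs_def2 in Hu'. destruct Hu' as [Hu1 Hu2].
    destruct (Rle_or_lt x u) as [Hxu|Hxu].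
    + assert (g x <= g u) by (apply Hm; lra).
      assert (g u - g x < eps) by (apply Hdd; lra).
      rewrite Rabs_right; lra.
    + assert (g u <= g x) by (apply Hm; lra).
      assert (g x - g u < eps) by (apply Hdd; lra).
      rewrite Rabs_left1; lra.
  - intros t Ht. destruct (Hi t Ht) as [Hg HI]. split; auto.
    apply exG; auto; try lra. intros x Hx; apply Hp; lra.
Qed.

Lemma exp_le1 x : x <= 0 -> exp x <= 1.
Proof. intros H. rewrite <- exp_0. destruct H as [H|H]; [left; apply exp_increasing; auto| rewrite H; lra]. Qed.

Theorem mainTheorem15 (theta : R) (F : R -> R -> R) :
  theta <= 0 ->
  is_biv_cdf (Ftheta theta) ->
  is_biv_cdf F ->
  biv_abs_cont F ->
  supported_unit_square F ->
  (* finiteness of the CDCPEs and EIT components (wherever defined) *)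
  (forall t1 t2, 0 < t1 < 1 -> 0 < t2 < 1 -> 0 < F t1 t2 ->
     inhabited (Riemann_integrable (cdcpe1_integrand F t1 t2) 0 t1) /\
     inhabited (Riemann_integrable (cdcpe2_integrand F t1 t2) 0 t2) /\
     inhabited (Riemann_integrable (fun x1 => F x1 t2) 0 t1) /\
     inhabited (Riemann_integrable (fun x2 => F t1 x2) 0 t2)) ->
  ((forall t1 t2, 0 < t1 < 1 -> 0 < t2 < 1 ->
      0 < F t1 t2 /\
      CDCPE1 F t1 t2 = (1 + theta * ln t2) / (2 + theta * ln t2) * EIT1 F t1 t2 /\
      CDCPE2 F t1 t2 = (1 + theta * ln t1) / (2 + theta * ln t1) * EIT2 F t1 t2)
   <->
   (forall t1 t2, 0 < t1 < 1 -> 0 < t2 < 1 ->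
      F t1 t2 = Rpower t1 (1 + theta * ln t2) * t2)).
Proof.
  intros Hth _ Hcdf Hac Hsup Hint.
  destruct Hcdf as [Hinc _]. destruct Hsup as [Hz H11].
  pose proof (abs1 F Hac) as Hac1.
  assert (lnneg : forall t, 0 < t < 1 -> ln t < 0)
    by (intros t Ht; rewrite <- ln_1; apply ln_increasing; lra).
  assert (Ha : forall t, 0 < t < 1 -> 1 <= 1 + theta * ln t)
    by (intros t Ht; pose proof (lnneg t Ht); nra).
  assert (goodR : (forall x y, 0 < x < 1 -> 0 < y < 1 -> 0 < F x y) ->
     forall t2, 0 < t2 < 1 -> good (fun x => F x t2)).
  { intros Fp t2 Ht2. apply good_of.
    - intros; apply Fp; auto.
    - intros x y H1 H2 H3. pose proof (Hinc x y 0 t2 H2 ltac:(lra)) as H.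
      unfold rect_mass in H. rewrite (Hz y 0), (Hz x 0) in H by (right; lra). lra.
    - intros eps Heps. destruct (Hac1 eps Heps) as [d [Hd Hdd]]. exists d. split; auto.
      intros x y H1 H2 H3 H4.
      assert (H : rect_mass F x y 0 t2 < eps) by (apply Hdd; nra).
      unfold rect_mass in H. rewrite (Hz y 0), (Hz x 0) in H by (right; lra). lra.
    - intros t Ht. destruct (Hint t t2 Ht Ht2 (Fp t t2 Ht Ht2)) as [[I1] [_ [[I3] _]]].
      split. exact (ex_RInt_Reals_1 _ _ _ I3). exact (ex_RInt_Reals_1 _ _ _ I1). }
  assert (goodC : (forall x y, 0 < x < 1 -> 0 < y < 1 -> 0 < F x y) ->
     forall t1, 0 < t1 < 1 -> good (fun y => F t1 y)).
  { intros Fp t1 Ht1. apply good_of.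
    - intros; apply Fp; auto.
    - intros x y H1 H2 H3. pose proof (Hinc 0 t1 x y ltac:(lra) H2) as H.
      unfold rect_mass in H. rewrite (Hz 0 y), (Hz 0 x) in H by (left; lra). lra.
    - intros eps Heps. destruct (Hac1 eps Heps) as [d [Hd Hdd]]. exists d. split; auto.
      intros x y H1 H2 H3 H4.
      assert (H : rect_mass F 0 t1 x y < eps) by (apply Hdd; nra).
      unfold rect_mass in H. rewrite (Hz 0 y), (Hz 0 x) in H by (left; lra). lra.
    - intros t Ht. destruct (Hint t1 t Ht1 Ht (Fp t1 t Ht1 Ht)) as [_ [[I2] [_ [I4]]]].
      split. exact (ex_RInt_Reals_1 _ _ _ I4). exact (ex_RInt_Reals_1 _ _ _ I2). }
  assert (rowEq : (forall x y, 0 < x < 1 -> 0 < y < 1 -> 0 < F x y) ->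
     forall t1 t2 c, 0 < t1 < 1 -> 0 < t2 < 1 ->
     (CDCPE1 F t1 t2 = c * EIT1 F t1 t2 <->
      RInt (fun x => F x t2 * ln (F x t2)) 0 t1 = (ln (F t1 t2) - c) * RInt (fun x => F x t2) 0 t1)).
  { intros Fp t1 t2 c Ht1 Ht2.
    destruct (Hint t1 t2 Ht1 Ht2 (Fp t1 t2 Ht1 Ht2)) as [I1 [_ [I3 _]]].
    unfold CDCPE1, EIT1. rewrite (RInt_eq _ _ _ I1), (RInt_eq _ _ _ I3).
    destruct I1 as [I1]. destruct I3 as [I3].
    apply (equiv1 (fun x => F x t2) t1 c); try lra.
    intros x Hx; apply Fp; lra. apply Fp; auto.
    exact (ex_RInt_Reals_1 _ _ _ I3). exact (ex_RInt_Reals_1 _ _ _ I1). }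
  assert (colEq : (forall x y, 0 < x < 1 -> 0 < y < 1 -> 0 < F x y) ->
     forall t1 t2 c, 0 < t1 < 1 -> 0 < t2 < 1 ->
     (CDCPE2 F t1 t2 = c * EIT2 F t1 t2 <->
      RInt (fun y => F t1 y * ln (F t1 y)) 0 t2 = (ln (F t1 t2) - c) * RInt (fun y => F t1 y) 0 t2)).
  { intros Fp t1 t2 c Ht1 Ht2.
    destruct (Hint t1 t2 Ht1 Ht2 (Fp t1 t2 Ht1 Ht2)) as [_ [I2 [_ I4]]].
    unfold CDCPE2, EIT2. rewrite (RInt_eq _ _ _ I2), (RInt_eq _ _ _ I4).
    destruct I2 as [I2]. destruct I4 as [I4].
    apply (equiv1 (fun y => F t1 y) t2 c); try lra.
    intros x Hx; apply Fp; lra. apply Fp; auto.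
    exact (ex_RInt_Reals_1 _ _ _ I4). exact (ex_RInt_Reals_1 _ _ _ I2). }
  split.
  - intros HL.
    assert (Fp : forall x y, 0 < x < 1 -> 0 < y < 1 -> 0 < F x y) by (intros; apply HL; auto).
    assert (rowlog : forall y, 0 < y < 1 -> exists b, forall x, 0 < x < 1 ->
              ln (F x y) = b + (1 + theta * ln y) * ln x).
    { intros y Hy. apply (fwd1 (fun x => F x y)); auto. intros t Ht.
      apply (proj1 (rowEq Fp t y _ Ht Hy)). destruct (HL t y Ht Hy) as [_ [E _]].
      rewrite E. replace (2 + theta * ln y) with (1 + theta * ln y + 1) by ring. reflexivity. }
    assert (collog : forall x, 0 < x < 1 -> exists b, forall y, 0 < y < 1 ->
              ln (F x y) = b + (1 + theta * ln x) * ln y).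
    { intros x Hx. apply (fwd1 (fun y => F x y)); auto. intros t Ht.
      apply (proj1 (colEq Fp x t _ Hx Ht)). destruct (HL x t Hx Ht) as [_ [_ E]].
      rewrite E. replace (2 + theta * ln x) with (1 + theta * ln x + 1) by ring. reflexivity. }
    set (phi := fun x y => ln (F x y) - (1 + theta * ln y) * ln x - ln y).
    assert (Hphi : forall x y, 0 < x < 1 -> 0 < y < 1 -> phi x y = phi (1/2) (1/2)).
    { intros x y Hx Hy. destruct (rowlog y Hy) as [b Hb]. destruct (collog (1/2) ltac:(lra)) as [b' Hb'].
      assert (e1 := Hb x Hx). assert (e2 := Hb (1/2) ltac:(lra)).
      assert (e3 := Hb' y Hy). assert (e4 := Hb' (1/2) ltac:(lra)).
      unfold phi. rewrite e1, e4.
      assert (b - b' = ln y - ln (1/2)) by nra. nra. }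
    set (m := phi (1/2) (1/2)).
    assert (Fform : forall x y, 0 < x < 1 -> 0 < y < 1 ->
              F x y = exp m * (Rpower x (1 + theta * ln y) * y)).
    { intros x y Hx Hy. assert (E := Hphi x y Hx Hy). fold m in E. rewrite <- E. unfold phi, Rpower.
      set (L := ln (F x y)). set (A := (1 + theta * ln y) * ln x).
      replace (L - A - ln y) with (L + - (A + ln y)) by ring.
      rewrite exp_plus, exp_Ropp, exp_plus, (exp_ln y) by lra.
      unfold L. rewrite exp_ln by (apply Fp; auto).
      pose proof (exp_pos A). field. split; lra. }
    assert (Fle1 : forall s, 0 < s < 1 -> F s s <= 1).
    { intros s Hs. pose proof (Hinc s 1 0 s ltac:(lra) ltac:(lra)) as A.
      pose proof (Hinc 0 1 s 1 ltac:(lra) ltac:(lra)) as B. unfold rect_mass in A, B.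
      rewrite (Hz 1 0), (Hz s 0) in A by (right; lra).
      rewrite (Hz 0 1), (Hz 0 s) in B by (left; lra). lra. }
    assert (Fnear : forall eps, 0 < eps -> exists s, 0 < s < 1 /\ 1 - eps < F s s).
    { intros eps Heps. destruct (Hac1 (eps/2) ltac:(lra)) as [d [Hd Hdd]].
      set (s := 1 - Rmin (1/2) (d/2)).
      assert (0 < Rmin (1/2) (d/2)) by (apply Rmin_glb_lt; lra).
      pose proof (Rmin_l (1/2) (d/2)). pose proof (Rmin_r (1/2) (d/2)).
      exists s. split. unfold s; lra.
      assert (A : rect_mass F s 1 0 1 < eps/2) by (apply Hdd; unfold s; nra).
      assert (B : rect_mass F 0 s s 1 < eps/2) by (apply Hdd; unfold s; nra).
      unfold rect_mass in A, B.
      rewrite (Hz 1 0), (Hz s 0) in A by (right; lra).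
      rewrite (Hz 0 1), (Hz 0 s) in B by (left; lra). lra. }
    assert (Hm0 : m = 0).
    { destruct (Rtotal_order m 0) as [Hlt|[Heq|Hgt]]; auto; exfalso.
      - assert (exp m < 1) by (rewrite <- exp_0; apply exp_increasing; auto).
        destruct (Fnear (1 - exp m) ltac:(lra)) as [s [Hs Hss]].
        rewrite (Fform s s Hs Hs) in Hss.
        assert (Rpower s (1 + theta * ln s) <= 1).
        { unfold Rpower. apply exp_le1. pose proof (lnneg s Hs). pose proof (Ha s Hs). nra. }
        assert (0 < Rpower s (1 + theta * ln s)) by (unfold Rpower; apply exp_pos).
        pose proof (exp_pos m).
        assert (Rpower s (1 + theta * ln s) * s <= 1) by nra. nra.
      - set (d := Rmin 1 (m / (2 * (2 - theta)))).
        assert (0 < d) by (apply Rmin_glb_lt; [lra| apply Rdiv_lt_0_compat; lra]).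
        assert (d <= 1) by apply Rmin_l.
        assert (d * (2 * (2 - theta)) <= m).
        { apply Rle_trans with (m / (2 * (2 - theta)) * (2 * (2 - theta))).
          apply Rmult_le_compat_r. lra. apply Rmin_r. right; field. lra. }
        set (s := exp (- d)).
        assert (Hs : 0 < s < 1).
        { split. apply exp_pos. rewrite <- exp_0. apply exp_increasing. lra. }
        assert (Hls : ln s = - d) by (apply ln_exp).
        pose proof (Fle1 s Hs) as Hle. rewrite (Fform s s Hs Hs) in Hle.
        unfold Rpower in Hle. rewrite Hls in Hle. unfold s in Hle.
        rewrite <- !exp_plus in Hle.
        assert (0 < m + ((1 + theta * - d) * - d + - d)) by nra.
        assert (Hx : exp 0 < exp (m + ((1 + theta * - d) * - d + - d))) by (apply exp_increasing; auto).
        rewrite exp_0 in Hx. lra. }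
    intros t1 t2 Ht1 Ht2. rewrite (Fform t1 t2 Ht1 Ht2), Hm0, exp_0. ring.
  - intros HR.
    assert (Fp : forall x y, 0 < x < 1 -> 0 < y < 1 -> 0 < F x y).
    { intros x y Hx Hy. rewrite HR by auto. unfold Rpower.
      apply Rmult_lt_0_compat; [apply exp_pos | lra]. }
    intros t1 t2 Ht1 Ht2. split; [apply Fp; auto | split].
    + replace (2 + theta * ln t2) with (1 + theta * ln t2 + 1) by ring.
      apply (proj2 (rowEq Fp t1 t2 _ Ht1 Ht2)).
      apply (bwd1 (fun x => F x t2) (1 + theta * ln t2) (ln t2)); auto.
      * intros t Ht. simpl. rewrite HR by auto. unfold Rpower.
        assert (exp ((1 + theta * ln t2) * ln t) <= 1).
        { apply exp_le1. pose proof (lnneg t Ht). pose proof (Ha t2 Ht2). nra. }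
        pose proof (exp_pos ((1 + theta * ln t2) * ln t)). nra.
      * intros t Ht. simpl. rewrite HR by auto. unfold Rpower.
        rewrite ln_mult by (try apply exp_pos; lra). rewrite ln_exp. ring.
    + replace (2 + theta * ln t1) with (1 + theta * ln t1 + 1) by ring.
      apply (proj2 (colEq Fp t1 t2 _ Ht1 Ht2)).
      apply (bwd1 (fun y => F t1 y) (1 + theta * ln t1) (ln t1)); auto.
      * intros t Ht. simpl. rewrite HR by auto. unfold Rpower.
        assert (exp ((1 + theta * ln t) * ln t1) <= 1).
        { apply exp_le1. pose proof (lnneg t1 Ht1). pose proof (Ha t Ht). nra. }
        pose proof (exp_pos ((1 + theta * ln t) * ln t1)). nra.
      * intros t Ht. simpl. rewrite HR by auto. unfold Rpower.
        rewrite ln_mult by (try apply exp_pos; lra). rewrite ln_exp. ring.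
Qed.
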